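(* Let $p,q$ be smooth strictly positive probability densities on $[0,1]$ with CDFs $F_p,F_q$ and inverse CDFs $F_p^{-1},F_q^{-1}:[0,1]\to[0,1]$. (i) For $V\in C^\infty([0,1])$ and $\mathcal V(p)=\int_0^1V p\,dx$: $\mathrm D_{\mathrm T,\mathcal V}(p\|q)=\int_0^1\mathrm D_V(F_p^{-1}(s)\|F_q^{-1}(s))\,ds$, with $\mathrm D_V(z_1\|z_2)=V(z_1)-V(z_2)-V'(z_2)(z_1-z_2)$. (ii) For $\tilde W\in C^\infty([-1,1])$ even and $\mathcal W(p)=\tfrac12\int_0^1\!\!\int_0^1\tilde W(x-\tilde x)p(x)p(\tilde x)\,dx\,d\tilde x$: $\mathrm D_{\mathrm T,\mathcal W}(p\|q)=\tfrac12\int_0^1\!\!\int_0^1\mathrm D_{\tilde W}\big(F_p^{-1}(s)-F_p^{-1}(\tilde s)\,\|\,F_q^{-1}(s)-F_q^{-1}(\tilde s)\big)ds\,d\tilde s$, where $\mathrm D_{\tilde W}$ is defined as $\mathrm D_V$ with $\tilde W$ in place of $V$. (iii) For $U:(0,\infty)\to\mathbb R$ of class $C^2$ and $\mathcal U(p)=\int_0^1U(p(x))dx$, set $\tilde U(z)=zU(1/z)$ for $z>0$. Then $\mathrm D_{\mathrm T,\mathcal U}(p\|q)=\int_0^1\mathrm D_{\tilde U}\big((F_p^{-1})'(s)\,\|\,(F_q^{-1})'(s)\big)ds$, with $\mathrm D_{\tilde U}(z_1\|z_2)=\tilde U(z_1)-\tilde U(z_2)-\tilde U'(z_2)(z_1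-z_2)$.
   Context: On $[0,1]$ the optimal transport map from $q$ to $p$ is the monotone map $T=F_p^{-1}\circ F_q$, which satisfies $p(T(x))T'(x)=q(x)$. For a smooth functional $\mathcal F$ on such densities with $L^2$ first variation $\frac{\delta\mathcal F}{\delta q}(q)(x)$ (for $\mathcal V,\mathcal W,\mathcal U$ these are $V(x)$, $\int_0^1\tilde W(x-\tilde x)q(\tilde x)d\tilde x$, $U'(q(x))$), the transport Bregman divergence is $$\mathrm D_{\mathrm T,\mathcal F}(p\|q)=\mathcal F(p)-\mathcal F(q)-\int_0^1\frac{d}{dx}\Big(\frac{\delta\mathcal F}{\delta q}(q)(x)\Big)\,(T(x)-x)\,q(x)\,dx .$$ *)

(* Defs.v *)
From Stdlib Require Import Reals.
From Coquelicot Require Import Coquelicot.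
Open Scope R_scope.

(** C^infinity on all of R. A function in C^infinity([a,b]) is, by convention
    (Whitney/Seeley), the restriction of a C^infinity function on R. *)
Definition smooth (f : R -> R) : Prop :=
  forall (n : nat) (x : R), ex_derive (Derive_n f n) x.

Definition C2_pos (U : R -> R) : Prop :=
  forall x : R, 0 < x ->
    ex_derive U x /\ ex_derive (Derive U) x /\ continuous (Derive (Derive U)) x.

Definition density01 (p : R -> R) : Prop :=
  (forall x, 0 <= x <= 1 -> 0 < p x) /\ RInt p 0 1 = 1.

Definition cdf (p : R -> R) (x : R) : R := RInt p 0 x.

Definition is_inv_cdf (p G : R -> R) : Prop :=
  forall s, 0 <= s <= 1 -> 0 <= G s <= 1 /\ cdf p (G s) = s.

(** Monotone optimal transport map from q to p: T = F_p^{-1} o F_q. *)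
Definition transport_map (Gp : R -> R) (q : R -> R) (x : R) : R :=
  Gp (cdf q x).

Definition bregman (f : R -> R) (z1 z2 : R) : R :=
  f z1 - f z2 - Derive f z2 * (z1 - z2).

(** Transport Bregman divergence of a functional F:
    F(p) - F(q) - int_0^1 d/dx (dF/dq(q))(x) (T(x) - x) q(x) dx,
    where [dFq] is the L^2 first variation dF/dq(q) as a function of x. *)
Definition transport_bregman (Fp Fq : R) (dFq : R -> R) (T q : R -> R) : R :=
  Fp - Fq - RInt (fun x => Derive dFq x * (T x - x) * q x) 0 1.

Definition potential_fun (V p : R -> R) : R := RInt (fun x => V x * p x) 0 1.
Definition potential_var (V : R -> R) (q : R -> R) (x : R) : R := V x.

Definition interaction_fun (W p : R -> R) : R :=
  / 2 * RInt (fun x => RInt (fun xt => W (x - xt) * p x * p xt) 0 1) 0 1.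
Definition interaction_var (W q : R -> R) (x : R) : R :=
  RInt (fun xt => W (x - xt) * q xt) 0 1.

Definition internal_fun (U p : R -> R) : R := RInt (fun x => U (p x)) 0 1.
Definition internal_var (U q : R -> R) (x : R) : R := Derive U (q x).

Definition Utilde (U : R -> R) (z : R) : R := z * U (/ z).

(* Main.v *)
Require Import Defs.
From Stdlib Require Import Reals Lra Ranalysis5.
From Coquelicot Require Import Coquelicot.
Open Scope R_scope.

Lemma cmul (f g : R -> R) x : continuous f x -> continuous g x -> continuous (fun y => f y * g y) x.
Proof. intros; apply (continuous_mult f g x); auto. Qed.
Lemma cminus (f g : R -> R) x : continuous f x -> continuous g x -> continuous (fun y => f y - g y) x.
Proof. intros; apply (continuous_minus f g x); auto. Qed.
Lemma cplus (f g : R -> R) x : continuous f x -> continuous g x -> continuous (fun y => f y + g y) x.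
Proof. intros; apply (continuous_plus f g x); auto. Qed.
Lemma ccomp (f g : R -> R) x : continuous f x -> continuous g (f x) -> continuous (fun y => g (f y)) x.
Proof. intros; apply (continuous_comp f g x); auto. Qed.
Lemma cconst (c x : R) : continuous (fun _ : R => c) x.
Proof. apply continuous_const. Qed.
Lemma cid (x : R) : continuous (fun y : R => y) x.
Proof. apply continuous_id. Qed.

Lemma RInt_minusR (f g : R -> R) a b : ex_RInt f a b -> ex_RInt g a b ->
  RInt (fun x => f x - g x) a b = RInt f a b - RInt g a b.
Proof. intros; apply (RInt_minus f g a b); auto. Qed.
Lemma RInt_plusR (f g : R -> R) a b : ex_RInt f a b -> ex_RInt g a b ->
  RInt (fun x => f x + g x) a b = RInt f a b + RInt g a b.
Proof. intros; apply (RInt_plus f g a b); auto. Qed.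
Lemma RInt_mulr (f : R -> R) a b c : ex_RInt f a b ->
  RInt (fun x => f x * c) a b = RInt f a b * c.
Proof. intros H. replace (RInt f a b * c) with (scal c (RInt f a b)).
 rewrite <- (RInt_scal f a b c H).
 apply RInt_ext. intros; unfold scal; simpl; unfold mult; simpl. ring.
 unfold scal; simpl; unfold mult; simpl. ring. Qed.

Lemma exc (f : R -> R) a b : a <= b -> (forall x, a <= x <= b -> continuous f x) -> ex_RInt f a b.
Proof. intros Hab H. apply (ex_RInt_continuous (V:=R_CompleteNormedModule)). intros z Hz.
 rewrite Rmin_left in Hz by lra. rewrite Rmax_right in Hz by lra. auto. Qed.

Lemma smooth_ex f : smooth f -> forall x, ex_derive f x.
Proof. intros H x. exact (H 0%nat x). Qed.
Lemma smooth_cont f : smooth f -> forall x, continuous f x.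
Proof. intros H x. apply (ex_derive_continuous (K:=R_AbsRing) (V:=R_NormedModule)), smooth_ex; auto. Qed.
Lemma smooth_D f : smooth f -> forall x, ex_derive (Derive f) x.
Proof. intros H x. exact (H 1%nat x). Qed.
Lemma smooth_Dcont f : smooth f -> forall x, continuous (Derive f) x.
Proof. intros H x. apply (ex_derive_continuous (K:=R_AbsRing) (V:=R_NormedModule)), smooth_D; auto. Qed.
Lemma smooth_DD f : smooth f -> forall x, ex_derive (Derive (Derive f)) x.
Proof. intros H x. exact (H 2%nat x). Qed.
Lemma smooth_DDcont f : smooth f -> forall x, continuous (Derive (Derive f)) x.
Proof. intros H x. apply (ex_derive_continuous (K:=R_AbsRing) (V:=R_NormedModule)), smooth_DD; auto. Qed.

Lemma cdf_derive p : smooth p -> forall x, is_derive (cdf p) x (p x).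
Proof.
 intros Hs x. unfold cdf.
 apply (is_derive_RInt p (fun b => RInt p 0 b) 0 x).
 - apply filter_forall. intros b. apply (RInt_correct (V:=R_CompleteNormedModule)). apply (ex_RInt_continuous (V:=R_CompleteNormedModule)).
   intros; apply smooth_cont; auto.
 - apply smooth_cont; auto.
Qed.

Definition clamp (s : R) := Rmax 0 (Rmin 1 s).
Lemma clamp_id s : 0 <= s <= 1 -> clamp s = s.
Proof. intros. unfold clamp. rewrite Rmin_right by lra. rewrite Rmax_right; lra. Qed.
Lemma clamp_range s : 0 <= clamp s <= 1.
Proof. unfold clamp. unfold Rmax, Rmin. repeat destruct Rle_dec; lra. Qed.
Lemma clamp_lip s t : Rabs (clamp s - clamp t) <= Rabs (s - t).
Proof. unfold clamp, Rmax, Rmin. repeat destruct Rle_dec; unfold Rabs; repeat destruct Rcase_abs; lra. Qed.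
Lemma clamp_mono s t : s <= t -> clamp s <= clamp t.
Proof. unfold clamp, Rmax, Rmin. repeat destruct Rle_dec; lra. Qed.

Lemma cdf0 p : cdf p 0 = 0.
Proof. unfold cdf. apply (RInt_point (V:=R_CompleteNormedModule)). Qed.
Lemma cdf1 p : density01 p -> cdf p 1 = 1.
Proof. intros [_ H]. exact H. Qed.

Lemma cdf_lt p : smooth p -> density01 p -> forall x y, 0 <= x -> x < y -> y <= 1 -> cdf p x < cdf p y.
Proof.
 intros Hs Hd x y H1 H2 H3.
 destruct (MVT_gen (cdf p) x y p) as [c [Hc He]].
 - intros z _. apply cdf_derive; auto.
 - intros z _. apply continuity_pt_filterlim.
   apply (ex_derive_continuous (K:=R_AbsRing) (V:=R_NormedModule)).
   eexists. apply cdf_derive; auto.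
 - rewrite Rmin_left in Hc by lra. rewrite Rmax_right in Hc by lra.
   destruct Hd as [Hp _]. assert (0 < p c) by (apply Hp; lra).
   assert (0 < p c * (y - x)) by (apply Rmult_lt_0_compat; lra). lra.
Qed.

Lemma cdf_le p : smooth p -> density01 p -> forall x y, 0 <= x -> x <= y -> y <= 1 -> cdf p x <= cdf p y.
Proof.
 intros Hs Hd x y H1 H2 H3. destruct (Req_dec x y) as [->|Hne]. lra.
 left. apply cdf_lt; auto. lra.
Qed.

Lemma cdf_range p : smooth p -> density01 p -> forall x, 0 <= x <= 1 -> 0 <= cdf p x <= 1.
Proof.
 intros Hs Hd x Hx. assert (A := cdf0 p). assert (B := cdf1 p Hd).
 assert (cdf p 0 <= cdf p x) by (apply cdf_le; auto; lra).
 assert (cdf p x <= cdf p 1) by (apply cdf_le; auto; lra). lra.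
Qed.

Lemma cdf_inj p : smooth p -> density01 p -> forall a b, 0 <= a <= 1 -> 0 <= b <= 1 -> cdf p a = cdf p b -> a = b.
Proof.
 intros Hs Hd a b Ha Hb E. destruct (Rtotal_order a b) as [H|[H|H]]; auto.
 - assert (cdf p a < cdf p b) by (apply cdf_lt; auto; lra). lra.
 - assert (cdf p b < cdf p a) by (apply cdf_lt; auto; lra). lra.
Qed.

Section Inv.
Variables (p G : R -> R).
Hypotheses (Hs : smooth p) (Hd : density01 p) (Hi : is_inv_cdf p G).

Lemma G_F x : 0 <= x <= 1 -> G (cdf p x) = x.
Proof.
 intros Hx. destruct (Hi (cdf p x)) as [H1 H2]. apply cdf_range; auto.
 apply (cdf_inj p); auto.
Qed.

Lemma G0 : G 0 = 0.
Proof. rewrite <- (cdf0 p) at 1. apply G_F. lra. Qed.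
Lemma G1 : G 1 = 1.
Proof. rewrite <- (cdf1 p Hd) at 1. apply G_F. lra. Qed.

Lemma G_lt s t : 0 <= s -> s < t -> t <= 1 -> G s < G t.
Proof.
 intros H1 H2 H3. destruct (Hi s) as [A1 A2]. lra. destruct (Hi t) as [B1 B2]. lra.
 destruct (Rlt_le_dec (G s) (G t)) as [H|H]; auto.
 assert (cdf p (G t) <= cdf p (G s)) by (apply cdf_le; auto; lra). lra.
Qed.

Lemma G_open s : 0 < s < 1 -> 0 < G s < 1.
Proof.
 intros H. split.
 - rewrite <- G0. apply G_lt; lra.
 - rewrite <- G1. apply G_lt; lra.
Qed.

Definition Gc (s : R) := G (clamp s).

Lemma Gc_range s : 0 <= Gc s <= 1.
Proof. unfold Gc. apply Hi. apply clamp_range. Qed.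
Lemma Gc_F x : 0 <= x <= 1 -> Gc (cdf p x) = x.
Proof. intros. unfold Gc. rewrite clamp_id. apply G_F; auto. apply cdf_range; auto. Qed.
Lemma Gc_id s : 0 <= s <= 1 -> Gc s = G s.
Proof. intros. unfold Gc. rewrite clamp_id; auto. Qed.
Lemma F_Gc s : cdf p (Gc s) = clamp s.
Proof. unfold Gc. apply Hi. apply clamp_range. Qed.

Lemma Gc_cont s0 : continuous Gc s0.
Proof.
 apply continuity_pt_filterlim. intros eps Heps.
 set (x0 := Gc s0).
 assert (Hx0 : 0 <= x0 <= 1) by apply Gc_range.
 set (a := Rmax 0 (x0 - eps/2)). set (b := Rmin 1 (x0 + eps/2)).
 assert (Ha : 0 <= a <= x0) by (unfold a, Rmax; destruct Rle_dec; lra).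
 assert (Hb : x0 <= b <= 1) by (unfold b, Rmin; destruct Rle_dec; lra).
 assert (Hd1 : exists d1, 0 < d1 /\ (a < x0 -> d1 <= cdf p x0 - cdf p a)).
 { destruct (Rlt_dec a x0) as [H|H].
   - exists (cdf p x0 - cdf p a). split. assert (cdf p a < cdf p x0) by (apply cdf_lt; auto; lra). lra.
     intros; lra.
   - exists 1. split. lra. intros; lra. }
 assert (Hd2 : exists d2, 0 < d2 /\ (x0 < b -> d2 <= cdf p b - cdf p x0)).
 { destruct (Rlt_dec x0 b) as [H|H].
   - exists (cdf p b - cdf p x0). split. assert (cdf p x0 < cdf p b) by (apply cdf_lt; auto; lra). lra.
     intros; lra.
   - exists 1. split. lra. intros; lra. }
 destruct Hd1 as [d1 [Hd1 Hd1']]. destruct Hd2 as [d2 [Hd2 Hd2']].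
 exists (Rmin d1 d2). split. apply Rmin_pos; lra.
 intros y [_ Hy]. simpl in Hy. unfold R_dist in Hy |- *.
 assert (Hc := clamp_lip y s0).
 assert (Hm1 := Rmin_l d1 d2). assert (Hm2 := Rmin_r d1 d2).
 assert (Fx0 : cdf p x0 = clamp s0) by apply F_Gc.
 assert (Fy : cdf p (Gc y) = clamp y) by apply F_Gc.
 assert (Hy0 := Gc_range y).
 assert (Lo : x0 - eps < Gc y).
 { destruct (Rle_dec (x0 - eps/2) 0) as [H|H].
   - lra.
   - assert (Ea : a = x0 - eps/2) by (unfold a, Rmax; destruct Rle_dec; lra).
     destruct (Rle_lt_dec (Gc y) a) as [H'|H']; [|lra].
     assert (cdf p (Gc y) <= cdf p a) by (apply cdf_le; auto; lra).
     assert (d1 <= cdf p x0 - cdf p a) by (apply Hd1'; lra).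
     revert Hy Hc. unfold Rabs. repeat destruct Rcase_abs; lra. }
 assert (Up : Gc y < x0 + eps).
 { destruct (Rle_dec 1 (x0 + eps/2)) as [H|H].
   - lra.
   - assert (Eb : b = x0 + eps/2) by (unfold b, Rmin; destruct Rle_dec; lra).
     destruct (Rle_lt_dec b (Gc y)) as [H'|H']; [|lra].
     assert (cdf p b <= cdf p (Gc y)) by (apply cdf_le; auto; lra).
     assert (d2 <= cdf p b - cdf p x0) by (apply Hd2'; lra).
     revert Hy Hc. unfold Rabs. repeat destruct Rcase_abs; lra. }
 simpl. unfold R_dist, Rabs. destruct Rcase_abs; lra.
Qed.

End Inv.

Lemma loc01 (P : R -> Prop) s : 0 < s < 1 -> (forall t, 0 < t < 1 -> P t) -> locally s P.
Proof. intros Hs H. apply (locally_interval P s 0 1); simpl; try lra. intros; apply H; lra. Qed.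

Section Inv2.
Variables (p G : R -> R).
Hypotheses (Hs : smooth p) (Hd : density01 p) (Hi : is_inv_cdf p G).

Lemma G_cont_int s : 0 < s < 1 -> continuous G s.
Proof.
 intros H. apply (continuous_ext_loc G (Gc G)).
 apply loc01; auto. intros t Ht. apply Gc_id; lra.
 apply (Gc_cont p G Hs Hd Hi).
Qed.

Lemma G_deriv s : 0 < s < 1 -> is_derive G s (/ p (G s)).
Proof.
 intros H.
 assert (Prf : forall a, G 0 <= a <= G 1 -> derivable_pt (cdf p) a).
 { intros a _. exists (p a). apply is_derive_Reals. apply cdf_derive; auto. }
 assert (Prg : continuity_pt G s).
 { apply continuity_pt_filterlim. apply G_cont_int; auto. }
 assert (Hincr : G 0 <= G s <= G 1).
 { rewrite (G0 p G Hs Hd Hi), (G1 p G Hs Hd Hi). apply Hi; lra. }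
 assert (Hd' : derive_pt (cdf p) (G s) (Prf (G s) Hincr) = p (G s)).
 { apply derive_pt_eq_0. apply is_derive_Reals. apply cdf_derive; auto. }
 assert (Hpos : 0 < p (G s)).
 { destruct Hd as [Hp _]. apply Hp. apply Hi; lra. }
 assert (L := derivable_pt_lim_recip_interv (cdf p) G 0 1 s Prf Prg ltac:(lra) H Hincr).
 rewrite Hd' in L. apply is_derive_Reals.
 replace (/ p (G s)) with (1 / p (G s)) by (field; lra).
 apply L. intros x Hx. unfold comp, id. apply Hi; auto. lra.
Qed.

Lemma Gc_deriv s : 0 < s < 1 -> is_derive (Gc G) s (/ p (G s)).
Proof.
 intros H. apply (is_derive_ext_loc G). apply loc01; auto. intros t Ht. symmetry. apply Gc_id; lra.
 apply G_deriv; auto.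
Qed.

Lemma Derive_G s : 0 < s < 1 -> Derive G s = / p (Gc G s).
Proof. intros H. rewrite Gc_id by lra. apply is_derive_unique, G_deriv; auto. Qed.

End Inv2.

Lemma chvar p : smooth p -> density01 p -> forall f : R -> R,
  (forall s, 0 <= s <= 1 -> continuous f s) ->
  RInt (fun x => f (cdf p x) * p x) 0 1 = RInt f 0 1.
Proof.
 intros Hs Hd f Hf.
 assert (E := RInt_comp (V:=R_CompleteNormedModule) f (cdf p) p 0 1).
 rewrite cdf0, (cdf1 p Hd) in E. rewrite <- E.
 - apply RInt_ext. intros; unfold scal; simpl; unfold mult; simpl. ring.
 - intros x Hx. rewrite Rmin_left in Hx by lra. rewrite Rmax_right in Hx by lra.
   apply Hf. apply cdf_range; auto.
 - intros x _. split. apply cdf_derive; auto. apply smooth_cont; auto.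
Qed.

Lemma RInt_zero a b : RInt (fun _ : R => 0) a b = 0.
Proof. rewrite (RInt_const (V:=R_CompleteNormedModule)). unfold scal; simpl; unfold mult; simpl. ring. Qed.

Lemma RInt_prim_derive (f : R -> R) t : (forall x, continuous f x) ->
  is_derive (fun u => RInt f 0 u) t (f t).
Proof.
 intros Hf. apply (is_derive_RInt f (fun u => RInt f 0 u) 0 t).
 - apply filter_forall. intros b. apply (RInt_correct (V:=R_CompleteNormedModule)).
   apply (ex_RInt_continuous (V:=R_CompleteNormedModule)). intros; auto.
 - auto.
Qed.

Lemma ftc01 (Fn f : R -> R) :
  (forall t, 0 < t < 1 -> is_derive Fn t (f t)) ->
  (forall t, continuous Fn t) -> (forall t, continuous f t) ->
  RInt f 0 1 = Fn 1 - Fn 0.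
Proof.
 intros HD HF Hf.
 destruct (MVT_gen (fun t => RInt f 0 t - Fn t) 0 1 (fun _ => 0)) as [c [_ Hc]].
 - intros x Hx. rewrite Rmin_left in Hx by lra. rewrite Rmax_right in Hx by lra.
   assert (H : is_derive (fun t => RInt f 0 t - Fn t) x (f x - f x)).
   { apply (is_derive_minus (K:=R_AbsRing) (V:=R_NormedModule)).
     apply RInt_prim_derive; auto. apply HD; auto. }
   replace (f x - f x) with 0 in H by ring. exact H.
 - intros x _. apply continuity_pt_filterlim. apply cminus.
   apply (ex_derive_continuous (K:=R_AbsRing) (V:=R_NormedModule)). eexists. apply RInt_prim_derive; auto.
   auto.
 - rewrite (RInt_point (V:=R_CompleteNormedModule)) in Hc. unfold zero in Hc; simpl in Hc. lra.
Qed.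

Lemma c2d_1 (k : R -> R -> R) x y : continuity_2d_pt k x y -> continuous (fun u => k u y) x.
Proof.
 intros H. apply continuity_pt_filterlim. intros eps Heps.
 destruct (H (mkposreal eps Heps)) as [d Hd]. exists d. split. apply cond_pos.
 intros u [_ Hu]. simpl in Hu |- *. unfold R_dist in *. apply Hd; auto.
 rewrite Rminus_eq_0, Rabs_R0. apply cond_pos.
Qed.
Lemma c2d_2 (k : R -> R -> R) x y : continuity_2d_pt k x y -> continuous (fun v => k x v) y.
Proof.
 intros H. apply continuity_pt_filterlim. intros eps Heps.
 destruct (H (mkposreal eps Heps)) as [d Hd]. exists d. split. apply cond_pos.
 intros u [_ Hu]. simpl in Hu |- *. unfold R_dist in *. apply Hd; auto.
 rewrite Rminus_eq_0, Rabs_R0. apply cond_pos.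
Qed.
Lemma c2d_swap (k : R -> R -> R) x y : continuity_2d_pt k x y -> continuity_2d_pt (fun u v => k v u) y x.
Proof.
 intros H eps. destruct (H eps) as [d Hd]. exists d. intros u v Hu Hv. apply Hd; auto.
Qed.

Lemma pcont_le (k : R -> R -> R) a b : a <= b -> (forall x y, continuity_2d_pt k x y) ->
  forall c, continuous (fun y => RInt (fun x => k x y) a b) c.
Proof.
 intros Hab Hk c. apply continuity_pt_filterlim. intros eps Heps.
 assert (He' : 0 < eps / (b - a + 1)) by (apply Rdiv_lt_0_compat; lra).
 destruct (uniform_continuity_2d_1d k a b c (fun x _ => Hk x c) (mkposreal _ He')) as [d Hd].
 exists d. split. apply cond_pos. intros y [_ Hy]. simpl in Hy |- *. unfold R_dist in *.
 assert (Ex : forall v, ex_RInt (fun x => k x v) a b).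
 { intros v. apply exc; auto. intros; apply c2d_1; auto. }
 rewrite <- RInt_minusR by auto.
 apply Rle_lt_trans with ((b - a) * (eps / (b - a + 1))).
 - apply abs_RInt_le_const; auto. apply (ex_RInt_minus (V:=R_CompleteNormedModule)); auto.
   intros t Ht. left. apply (Hd t c t y); try (destruct d; simpl in *; lra).
   unfold Rabs in Hy; destruct Rcase_abs in Hy; lra.
   rewrite Rminus_eq_0, Rabs_R0. apply cond_pos.
 - apply Rlt_le_trans with ((b - a + 1) * (eps / (b - a + 1))).
   apply Rmult_lt_compat_r; lra. right. field. lra.
Qed.

Lemma pcont (k : R -> R -> R) a b : (forall x y, continuity_2d_pt k x y) ->
  forall c, continuous (fun y => RInt (fun x => k x y) a b) c.
Proof.
 intros Hk c. destruct (Rle_dec a b) as [H|H].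
 - apply pcont_le; auto.
 - apply (continuous_ext (fun y => - RInt (fun x => k x y) b a)).
   + intros y. rewrite <- (opp_RInt_swap (V:=R_CompleteNormedModule) (fun x => k x y) a b).
     unfold opp; simpl. ring.
     apply (ex_RInt_continuous (V:=R_CompleteNormedModule)). intros; apply c2d_1; auto.
   + apply (continuous_opp (K:=R_AbsRing) (V:=R_NormedModule) (fun y => RInt (fun x => k x y) b a)).
     apply pcont_le; auto; lra.
Qed.

Lemma swap01 (k : R -> R -> R) : (forall x y, continuity_2d_pt k x y) ->
  RInt (fun y => RInt (fun x => k x y) 0 1) 0 1 = RInt (fun x => RInt (fun y => k x y) 0 1) 0 1.
Proof.
 intros Hk.
 set (A := fun x => RInt (fun y => k x y) 0 1).
 assert (HA : forall x, continuous A x).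
 { intros x. apply (pcont (fun y x => k x y)). intros; apply c2d_swap; auto. }
 assert (Hk1 : forall y x, continuous (fun u => k u y) x) by (intros; apply c2d_1; auto).
 assert (HP : forall t, is_derive (fun t => RInt A 0 t - RInt (fun y => RInt (fun x => k x y) 0 t) 0 1) t 0).
 { intros t. cut (is_derive (fun t => RInt A 0 t - RInt (fun y => RInt (fun x => k x y) 0 t) 0 1) t (A t - A t)).
   { intros H. replace (A t - A t) with 0 in H by ring. exact H. }
   apply (is_derive_minus (K:=R_AbsRing) (V:=R_NormedModule)).
   apply RInt_prim_derive; auto.
   assert (E : A t = RInt (fun y => Derive (fun u => RInt (fun x => k x y) 0 u) t) 0 1).
   { unfold A. apply RInt_ext. intros y _. symmetry. apply is_derive_unique. apply (RInt_prim_derive (fun x => k x y)). auto. }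
   rewrite E.
   apply (is_derive_RInt_param (fun u y => RInt (fun x => k x y) 0 u) 0 1 t).
   + apply filter_forall. intros u y _. eexists. apply (RInt_prim_derive (fun x => k x y)). auto.
   + intros y _. apply (continuity_2d_pt_ext k). intros u v. symmetry. apply is_derive_unique.
     apply (RInt_prim_derive (fun x => k x v)). auto. auto.
   + apply filter_forall. intros u. apply (ex_RInt_continuous (V:=R_CompleteNormedModule)).
     intros z _. apply (pcont k 0 u); auto. }
 destruct (MVT_gen (fun t => RInt A 0 t - RInt (fun y => RInt (fun x => k x y) 0 t) 0 1) 0 1 (fun _ => 0)) as [c [_ Hc]].
 - intros t _. apply HP.
 - intros x _. apply continuity_pt_filterlim.
   apply (ex_derive_continuous (K:=R_AbsRing) (V:=R_NormedModule) (fun t => RInt A 0 t - RInt (fun y => RInt (fun x => k x y) 0 t) 0 1)). eexists. apply HP.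
 - rewrite (RInt_point (V:=R_CompleteNormedModule)) in Hc. unfold zero in Hc; simpl in Hc.
   rewrite (RInt_ext (fun y => RInt (fun x => k x y) 0 0) (fun _ => 0)) in Hc.
   pose proof (RInt_zero 0 1). unfold A in *. lra.
   intros y _. apply (RInt_point (V:=R_CompleteNormedModule)).
Qed.

Lemma RInt_ext01 (f g : R -> R) : (forall x, 0 < x < 1 -> f x = g x) -> RInt f 0 1 = RInt g 0 1.
Proof. intros H. apply RInt_ext. intros x Hx. rewrite Rmin_left, Rmax_right in Hx by lra. auto. Qed.

Lemma exc01 (f : R -> R) : (forall x, continuous f x) -> ex_RInt f 0 1.
Proof. intros H. apply exc. lra. intros; auto. Qed.

Lemma ccompR (f g : R -> R) x : continuous f x -> (forall y, continuous g y) -> continuous (fun y => g (f y)) x.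
Proof. intros. apply ccomp; auto. Qed.

Theorem part1 p q Gp Gq : smooth p -> smooth q -> density01 p -> density01 q ->
    is_inv_cdf p Gp -> is_inv_cdf q Gq ->
    (forall V : R -> R, smooth V ->
       transport_bregman (potential_fun V p) (potential_fun V q)
         (potential_var V q) (transport_map Gp q) q
       = RInt (fun s => bregman V (Gp s) (Gq s)) 0 1).
Proof.
 intros Hsp Hsq Hdp Hdq Hip Hiq V HV.
 assert (CV := smooth_cont V HV). assert (CdV := smooth_Dcont V HV).
 assert (Cp := Gc_cont p Gp Hsp Hdp Hip). assert (Cq := Gc_cont q Gq Hsq Hdq Hiq).
 unfold transport_bregman, potential_fun, potential_var, transport_map, bregman.
 assert (E1 : RInt (fun x => V x * p x) 0 1 = RInt (fun s => V (Gc Gp s)) 0 1).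
 { rewrite <- (chvar p Hsp Hdp (fun s => V (Gc Gp s))).
   apply RInt_ext01. intros x Hx. rewrite (Gc_F p Gp Hsp Hdp Hip) by lra. reflexivity.
   intros s _. apply ccompR; auto. }
 assert (E2 : RInt (fun x => V x * q x) 0 1 = RInt (fun s => V (Gc Gq s)) 0 1).
 { rewrite <- (chvar q Hsq Hdq (fun s => V (Gc Gq s))).
   apply RInt_ext01. intros x Hx. rewrite (Gc_F q Gq Hsq Hdq Hiq) by lra. reflexivity.
   intros s _. apply ccompR; auto. }
 assert (E3 : RInt (fun x => Derive (fun x => V x) x * (Gp (cdf q x) - x) * q x) 0 1
   = RInt (fun s => Derive V (Gc Gq s) * (Gc Gp s - Gc Gq s)) 0 1).
 { rewrite <- (chvar q Hsq Hdq (fun s => Derive V (Gc Gq s) * (Gc Gp s - Gc Gq s))).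
   apply RInt_ext01. intros x Hx. rewrite (Gc_F q Gq Hsq Hdq Hiq) by lra.
   rewrite (Gc_id Gp) by (apply cdf_range; auto; lra). reflexivity.
   intros s _. apply cmul. apply ccompR; auto. apply cminus; auto. }
 rewrite E1, E2, E3.
 rewrite (RInt_ext01 (fun s => V (Gp s) - V (Gq s) - Derive V (Gq s) * (Gp s - Gq s)) (fun s => (V (Gc Gp s) - V (Gc Gq s)) - Derive V (Gc Gq s) * (Gc Gp s - Gc Gq s))).
 2: { intros s Hs. rewrite !Gc_id by lra. reflexivity. }
 rewrite RInt_minusR, RInt_minusR. reflexivity.
 all: apply exc01; intros.
 all: try (apply cminus; apply ccompR; auto; fail).
 all: try (apply ccompR; auto; fail).
 apply cmul. apply ccompR; auto. apply cminus; auto.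
Qed.

Lemma dmul (f g : R -> R) x a b : is_derive f x a -> is_derive g x b ->
  is_derive (fun y => f y * g y) x (a * g x + f x * b).
Proof. intros. apply (is_derive_mult (K:=R_AbsRing)); auto. intros; apply Rmult_comm. Qed.
Lemma dminus (f g : R -> R) x a b : is_derive f x a -> is_derive g x b ->
  is_derive (fun y => f y - g y) x (a - b).
Proof. intros. apply (is_derive_minus (K:=R_AbsRing) (V:=R_NormedModule)); auto. Qed.
Lemma dcomp (f g : R -> R) x a b : is_derive f (g x) a -> is_derive g x b ->
  is_derive (fun y => f (g y)) x (b * a).
Proof. intros. apply (is_derive_comp (K:=R_AbsRing) (V:=R_NormedModule)); auto. Qed.
Lemma dext (f : R -> R) x l l' : is_derive f x l -> l = l' -> is_derive f x l'.
Proof. intros H ->; auto. Qed.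

Section P3s.
Variable U : R -> R.
Hypothesis HU : C2_pos U.

Lemma U_ex x : 0 < x -> ex_derive U x.
Proof. intros; apply HU; auto. Qed.
Lemma U_cont x : 0 < x -> continuous U x.
Proof. intros; apply (ex_derive_continuous (K:=R_AbsRing) (V:=R_NormedModule)), U_ex; auto. Qed.
Lemma DU_ex x : 0 < x -> ex_derive (Derive U) x.
Proof. intros; apply HU; auto. Qed.
Lemma DU_cont x : 0 < x -> continuous (Derive U) x.
Proof. intros; apply (ex_derive_continuous (K:=R_AbsRing) (V:=R_NormedModule)), DU_ex; auto. Qed.
Lemma DDU_cont x : 0 < x -> continuous (Derive (Derive U)) x.
Proof. intros; apply HU; auto. Qed.

Lemma DUt z : 0 < z -> Derive (Utilde U) z = U (/ z) - Derive U (/ z) / z.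
Proof.
 intros Hz. apply is_derive_unique. unfold Utilde.
 eapply dext. apply dmul. apply (is_derive_id (K:=R_AbsRing)).
 apply dcomp. apply Derive_correct, U_ex. apply Rinv_0_lt_compat; auto.
 apply is_derive_inv. apply (is_derive_id (K:=R_AbsRing)). lra.
 simpl. unfold one; simpl. field. lra.
Qed.
End P3s.

Section Part3.
Variables (p q Gp Gq U : R -> R).
Hypotheses (Hsp : smooth p) (Hsq : smooth q) (Hdp : density01 p) (Hdq : density01 q)
  (Hip : is_inv_cdf p Gp) (Hiq : is_inv_cdf q Gq) (HU : C2_pos U).

Definition psi (y : R) := U (q y) - Derive U (q y) * q y.

Lemma posq s : 0 < q (Gc Gq s).
Proof. destruct Hdq as [H _]. apply H. apply (Gc_range q Gq Hiq). Qed.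
Lemma posp s : 0 < p (Gc Gp s).
Proof. destruct Hdp as [H _]. apply H. apply (Gc_range p Gp Hip). Qed.

Lemma psi_der y : 0 < q y ->
  is_derive psi y (- Derive (Derive U) (q y) * Derive q y * q y).
Proof.
 intros Hy. unfold psi. eapply dext.
 apply dminus. apply (dcomp U q). apply Derive_correct, (U_ex U HU); auto.
 apply Derive_correct, smooth_ex; auto.
 apply dmul. apply (dcomp (Derive U) q). apply Derive_correct, (DU_ex U HU); auto.
 apply Derive_correct, smooth_ex; auto. apply Derive_correct, smooth_ex; auto.
 simpl. ring.
Qed.

Lemma psi_cont y : 0 < q y -> continuous psi y.
Proof.
 intros Hy. unfold psi. apply cminus. apply ccomp. apply smooth_cont; auto. apply (U_cont U HU); auto.
 apply cmul. apply ccomp. apply smooth_cont; auto. apply (DU_cont U HU); auto.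
 apply smooth_cont; auto.
Qed.

Lemma cont_pG s : continuous (fun s => p (Gc Gp s)) s.
Proof. apply ccompR. apply (Gc_cont p Gp Hsp Hdp Hip). apply smooth_cont; auto. Qed.
Lemma cont_qG s : continuous (fun s => q (Gc Gq s)) s.
Proof. apply ccompR. apply (Gc_cont q Gq Hsq Hdq Hiq). apply smooth_cont; auto. Qed.
Lemma cont_hp s : continuous (fun s => / p (Gc Gp s)) s.
Proof. apply continuous_Rinv_comp. apply cont_pG. apply Rgt_not_eq, posp. Qed.
Lemma cont_hq s : continuous (fun s => / q (Gc Gq s)) s.
Proof. apply continuous_Rinv_comp. apply cont_qG. apply Rgt_not_eq, posq. Qed.

Lemma Ut_cont (h : R -> R) s : continuous h s -> 0 < h s -> continuous (fun s => Utilde U (h s)) s.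
Proof.
 intros Hc Hp. unfold Utilde. apply cmul; auto.
 apply (ccomp (fun s => / h s) U). apply continuous_Rinv_comp; auto. lra.
 apply (U_cont U HU). apply Rinv_0_lt_compat; auto.
Qed.

Lemma key3 : RInt (fun s => psi (Gc Gq s) * (/ p (Gc Gp s) - / q (Gc Gq s))) 0 1 =
  RInt (fun s => Derive (Derive U) (q (Gc Gq s)) * Derive q (Gc Gq s) * (Gc Gp s - Gc Gq s)) 0 1.
Proof.
 assert (Cp := Gc_cont p Gp Hsp Hdp Hip). assert (Cq := Gc_cont q Gq Hsq Hdq Hiq).
 assert (Cf : forall t, continuous (fun s => Derive (Derive U) (q (Gc Gq s)) * Derive q (Gc Gq s) * (Gc Gp s - Gc Gq s)) t).
 { intros t. apply cmul. apply cmul. apply (ccomp (fun s => q (Gc Gq s))). apply cont_qG.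
   apply (DDU_cont U HU). apply posq. apply ccompR; auto. apply smooth_Dcont; auto.
   apply cminus; auto. }
 assert (Ca : forall t, continuous (fun s => psi (Gc Gq s) * (/ p (Gc Gp s) - / q (Gc Gq s))) t).
 { intros t. apply cmul. apply ccomp; auto. apply psi_cont. apply posq. apply cminus. apply cont_hp. apply cont_hq. }
 assert (H : RInt (fun s => psi (Gc Gq s) * (/ p (Gc Gp s) - / q (Gc Gq s)) -
     Derive (Derive U) (q (Gc Gq s)) * Derive q (Gc Gq s) * (Gc Gp s - Gc Gq s)) 0 1
   = psi (Gc Gq 1) * (Gc Gp 1 - Gc Gq 1) - psi (Gc Gq 0) * (Gc Gp 0 - Gc Gq 0)).
 { apply (ftc01 (fun s => psi (Gc Gq s) * (Gc Gp s - Gc Gq s))).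
 - intros t Ht. eapply dext. apply dmul. apply dcomp. apply psi_der. apply posq.
   apply (Gc_deriv q Gq Hsq Hdq Hiq); auto.
   apply dminus. apply (Gc_deriv p Gp Hsp Hdp Hip); auto. apply (Gc_deriv q Gq Hsq Hdq Hiq); auto.
   assert (0 < q (Gc Gq t)) by apply posq. rewrite !(Gc_id Gq) in * by lra. rewrite !(Gc_id Gp) by lra.
   assert (0 < p (Gc Gp t)) by apply posp. rewrite (Gc_id Gp) in * by lra. simpl. field. split; lra.
 - intros t. apply cmul. apply ccomp; auto. apply psi_cont. apply posq. apply cminus; auto.
 - intros t. apply cminus; auto. }
 rewrite RInt_minusR in H.
 - rewrite !(Gc_id Gp), !(Gc_id Gq) in H by lra.
   rewrite (G0 p Gp Hsp Hdp Hip), (G1 p Gp Hsp Hdp Hip), (G0 q Gq Hsq Hdq Hiq), (G1 q Gq Hsq Hdq Hiq) in H.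
   assert (Z : 0 = psi 1 * (1 - 1) - psi 0 * (0 - 0)) by ring. lra.
 - apply exc01; auto.
 - apply exc01; auto.
Qed.

Theorem part3 :
       transport_bregman (internal_fun U p) (internal_fun U q)
         (internal_var U q) (transport_map Gp q) q
       = RInt (fun s => bregman (Utilde U) (Derive Gp s) (Derive Gq s)) 0 1.
Proof.
 assert (Cp := Gc_cont p Gp Hsp Hdp Hip). assert (Cq := Gc_cont q Gq Hsq Hdq Hiq).
 unfold transport_bregman, internal_fun, internal_var, transport_map, bregman.
 assert (E1 : RInt (fun x => U (p x)) 0 1 = RInt (fun s => Utilde U (/ p (Gc Gp s))) 0 1).
 { rewrite <- (chvar p Hsp Hdp (fun s => Utilde U (/ p (Gc Gp s)))).
   apply RInt_ext01. intros x Hx. rewrite (Gc_F p Gp Hsp Hdp Hip) by lra.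
   assert (0 < p x) by (apply Hdp; lra).
   unfold Utilde. rewrite Rinv_inv. field. lra.
   intros s _. apply Ut_cont. apply cont_hp. apply Rinv_0_lt_compat, posp. }
 assert (E2 : RInt (fun x => U (q x)) 0 1 = RInt (fun s => Utilde U (/ q (Gc Gq s))) 0 1).
 { rewrite <- (chvar q Hsq Hdq (fun s => Utilde U (/ q (Gc Gq s)))).
   apply RInt_ext01. intros x Hx. rewrite (Gc_F q Gq Hsq Hdq Hiq) by lra.
   assert (0 < q x) by (apply Hdq; lra).
   unfold Utilde. rewrite Rinv_inv. field. lra.
   intros s _. apply Ut_cont. apply cont_hq. apply Rinv_0_lt_compat, posq. }
 assert (E3 : RInt (fun x => Derive (fun x => Derive U (q x)) x * (Gp (cdf q x) - x) * q x) 0 1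
   = RInt (fun s => Derive (Derive U) (q (Gc Gq s)) * Derive q (Gc Gq s) * (Gc Gp s - Gc Gq s)) 0 1).
 { rewrite <- (chvar q Hsq Hdq (fun s => Derive (Derive U) (q (Gc Gq s)) * Derive q (Gc Gq s) * (Gc Gp s - Gc Gq s))).
   apply RInt_ext01. intros x Hx. rewrite (Gc_F q Gq Hsq Hdq Hiq) by lra.
   rewrite (Gc_id Gp) by (apply cdf_range; auto; lra).
   assert (0 < q x) by (apply Hdq; lra).
   rewrite Derive_comp. ring. apply (DU_ex U HU); auto. apply smooth_ex; auto.
   intros s _. apply cmul. apply cmul. apply (ccomp (fun s => q (Gc Gq s))). apply cont_qG.
   apply (DDU_cont U HU). apply posq. apply ccompR; auto. apply smooth_Dcont; auto.
   apply cminus; auto. }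
 rewrite E1, E2, E3, <- key3.
 rewrite (RInt_ext01 (fun s => Utilde U (Derive Gp s) - Utilde U (Derive Gq s) -
    Derive (Utilde U) (Derive Gq s) * (Derive Gp s - Derive Gq s))
   (fun s => Utilde U (/ p (Gc Gp s)) - Utilde U (/ q (Gc Gq s)) - psi (Gc Gq s) * (/ p (Gc Gp s) - / q (Gc Gq s)))).
 2: { intros s Hs. rewrite (Derive_G p Gp Hsp Hdp Hip), (Derive_G q Gq Hsq Hdq Hiq) by lra.
      rewrite (DUt U HU). rewrite Rinv_inv. unfold psi. f_equal. f_equal. f_equal.
      assert (0 < q (Gc Gq s)) by apply posq. field. lra.
      apply Rinv_0_lt_compat, posq. }
 rewrite RInt_minusR, RInt_minusR. reflexivity.
 - apply exc01. intros. apply Ut_cont. apply cont_hp. apply Rinv_0_lt_compat, posp.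
 - apply exc01. intros. apply Ut_cont. apply cont_hq. apply Rinv_0_lt_compat, posq.
 - apply exc01. intros. apply cminus; apply Ut_cont; try apply cont_hp; try apply cont_hq;
   apply Rinv_0_lt_compat; try apply posp; apply posq.
 - apply exc01. intros. apply cmul. apply ccomp; auto. apply psi_cont. apply posq. apply cminus. apply cont_hp. apply cont_hq.
Qed.
End Part3.

Lemma c2_fst (f : R -> R) x y : continuous f x -> continuity_2d_pt (fun u v => f u) x y.
Proof. intros H. apply (continuity_1d_2d_pt_comp f (fun u v => u)). apply continuity_pt_filterlim; auto. apply continuity_2d_pt_id1. Qed.
Lemma c2_snd (f : R -> R) x y : continuous f y -> continuity_2d_pt (fun u v => f v) x y.
Proof. intros H. apply (continuity_1d_2d_pt_comp f (fun u v => v)). apply continuity_pt_filterlim; auto. apply continuity_2d_pt_id2. Qed.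
Lemma c2_comp (f : R -> R) (g : R -> R -> R) x y : continuity_2d_pt g x y -> continuous f (g x y) ->
  continuity_2d_pt (fun u v => f (g u v)) x y.
Proof. intros H1 H2. apply continuity_1d_2d_pt_comp; auto. apply continuity_pt_filterlim; auto. Qed.

Lemma dconst (c x : R) : is_derive (fun _ : R => c) x 0.
Proof. apply (is_derive_const (K:=R_AbsRing) (V:=R_NormedModule)). Qed.
Lemma did (x : R) : is_derive (fun y : R => y) x 1.
Proof. apply (is_derive_id (K:=R_AbsRing)). Qed.

Section Part2.
Variables (p q Gp Gq W : R -> R).
Hypotheses (Hsp : smooth p) (Hsq : smooth q) (Hdp : density01 p) (Hdq : density01 q)
  (Hip : is_inv_cdf p Gp) (Hiq : is_inv_cdf q Gq) (HW : smooth W)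
  (Hev : forall z, -1 <= z <= 1 -> W (- z) = W z).

Lemma Wodd z : -1 < z < 1 -> Derive W (- z) = - Derive W z.
Proof.
 intros Hz.
 assert (H1 : is_derive (fun x => W (- x)) z (-1 * Derive W (- z))).
 { eapply dext. apply dcomp. apply Derive_correct, smooth_ex; auto.
   apply (is_derive_opp (K:=R_AbsRing) (V:=R_NormedModule) (fun y => y)). apply did.
   simpl. unfold opp; simpl. ring. }
 assert (H2 : is_derive W z (-1 * Derive W (- z))).
 { apply (is_derive_ext_loc (fun x => W (- x))); auto.
   apply (locally_interval _ z (-1) 1); simpl; try lra. intros; apply Hev; lra. }
 apply is_derive_unique in H2. lra.
Qed.

Definition AA (G : R -> R) := RInt (fun t => RInt (fun s => W (Gc G t - Gc G s)) 0 1) 0 1.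

Lemma CW : forall x, continuous W x.
Proof. apply smooth_cont; auto. Qed.
Lemma CdW : forall x, continuous (Derive W) x.
Proof. apply smooth_Dcont; auto. Qed.

Lemma interaction_AA (r G : R -> R) : smooth r -> density01 r -> is_inv_cdf r G ->
  interaction_fun W r = / 2 * AA G.
Proof.
 intros Hs Hd Hi. unfold interaction_fun, AA. f_equal.
 assert (Cb := Gc_cont r G Hs Hd Hi).
 assert (E : forall x, RInt (fun xt => W (x - xt) * r x * r xt) 0 1 = RInt (fun s => W (x - Gc G s)) 0 1 * r x).
 { intros x. rewrite <- RInt_mulr.
   rewrite <- (chvar r Hs Hd (fun s => W (x - Gc G s) * r x)).
   apply RInt_ext01. intros xt Hxt. rewrite (Gc_F r G Hs Hd Hi) by lra. ring.
   intros s _. apply cmul. apply ccompR. apply cminus; auto. apply cconst. apply CW. apply cconst.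
   apply exc01. intros. apply ccompR. apply cminus; auto. apply cconst. apply CW. }
 rewrite (RInt_ext01 _ (fun x => RInt (fun s => W (x - Gc G s)) 0 1 * r x)) by (intros; apply E).
 rewrite <- (chvar r Hs Hd (fun t => RInt (fun s => W (Gc G t - Gc G s)) 0 1)).
 apply RInt_ext01. intros x Hx. rewrite (Gc_F r G Hs Hd Hi) by lra. reflexivity.
 intros s _. apply (pcont (fun s t => W (Gc G t - Gc G s))).
 intros u v. apply c2_comp. apply continuity_2d_pt_minus. apply c2_snd; auto. apply c2_fst; auto. apply CW.
Qed.


Lemma dWq t u0 : is_derive (fun u => W (u - t) * q t) u0 (Derive W (u0 - t) * q t).
Proof.
 eapply dext. apply (dmul (fun u => W (u - t)) (fun _ => q t)).
 apply (dcomp W (fun u => u - t)). apply Derive_correct, smooth_ex; auto.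
 apply dminus. apply did. apply dconst. apply dconst. simpl. ring.
Qed.

Lemma Dvar x : Derive (interaction_var W q) x = RInt (fun t => Derive W (x - t) * q t) 0 1.
Proof.
 assert (Cq := smooth_cont q Hsq).
 unfold interaction_var. apply is_derive_unique.
 eapply dext. apply (is_derive_RInt_param (fun u t => W (u - t) * q t) 0 1 x).
 - apply filter_forall. intros u t _. eexists. apply dWq.
 - intros t _. apply (continuity_2d_pt_ext (fun u v => Derive W (u - v) * q v)).
   intros u v. symmetry. apply is_derive_unique, dWq.
   apply continuity_2d_pt_mult. apply c2_comp. apply continuity_2d_pt_minus.
   apply continuity_2d_pt_id1. apply continuity_2d_pt_id2. apply CdW. apply c2_snd; auto.
 - apply filter_forall. intros u. apply exc01. intros. apply cmul. apply ccompR. apply cminus. apply cconst. apply cid. apply CW. auto.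
 - apply RInt_ext01. intros t _. apply is_derive_unique, dWq.
Qed.

Definition Dq (s : R) := Gc Gp s - Gc Gq s.

Lemma CDq s : continuous Dq s.
Proof. unfold Dq. apply cminus. apply (Gc_cont p Gp Hsp Hdp Hip). apply (Gc_cont q Gq Hsq Hdq Hiq). Qed.
Lemma Ca s : continuous (Gc Gq) s.
Proof. apply (Gc_cont q Gq Hsq Hdq Hiq). Qed.
Lemma Cb s : continuous (Gc Gp) s.
Proof. apply (Gc_cont p Gp Hsp Hdp Hip). Qed.

Definition T3 := RInt (fun t => RInt (fun s => Derive W (Gc Gq t - Gc Gq s) * Dq t) 0 1) 0 1.

Lemma third_T3 : RInt (fun x => Derive (interaction_var W q) x * (transport_map Gp q x - x) * q x) 0 1 = T3.
Proof.
 assert (Cq := smooth_cont q Hsq).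
 unfold T3, transport_map.
 assert (E : forall x, Derive (interaction_var W q) x = RInt (fun s => Derive W (x - Gc Gq s)) 0 1).
 { intros x. rewrite Dvar.
   rewrite <- (chvar q Hsq Hdq (fun s => Derive W (x - Gc Gq s))).
   apply RInt_ext01. intros t Ht. rewrite (Gc_F q Gq Hsq Hdq Hiq) by lra. reflexivity.
   intros s _. apply ccompR. apply cminus. apply cconst. apply Ca. apply CdW. }
 rewrite (RInt_ext01 _ (fun x => RInt (fun s => Derive W (x - Gc Gq s)) 0 1 * (Gp (cdf q x) - x) * q x))
   by (intros; rewrite E; reflexivity).
 rewrite <- (chvar q Hsq Hdq (fun t => RInt (fun s => Derive W (Gc Gq t - Gc Gq s) * Dq t) 0 1)).
 - apply RInt_ext01. intros x Hx. unfold Dq. rewrite (Gc_F q Gq Hsq Hdq Hiq) by lra.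
   rewrite (Gc_id Gp) by (apply cdf_range; auto; lra).
   rewrite RInt_mulr. reflexivity.
   apply exc01. intros. apply ccompR. apply cminus. apply cconst. apply Ca. apply CdW.
 - intros s _. apply (pcont (fun s t => Derive W (Gc Gq t - Gc Gq s) * Dq t)).
   intros u v. apply continuity_2d_pt_mult. apply c2_comp. apply continuity_2d_pt_minus.
   apply c2_snd, Ca. apply c2_fst, Ca. apply CdW. apply c2_snd, CDq.
Qed.

Lemma rhs2 : / 2 * RInt (fun st => RInt (fun s =>
             bregman W (Gp s - Gp st) (Gq s - Gq st)) 0 1) 0 1 = / 2 * (AA Gp - AA Gq - T3 - T3).
Proof.
 assert (K1 : forall u v, continuity_2d_pt (fun s t => W (Gc Gp t - Gc Gp s)) u v).
 { intros u v. apply c2_comp. apply continuity_2d_pt_minus. apply c2_snd, Cb. apply c2_fst, Cb. apply CW. }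
 assert (K2 : forall u v, continuity_2d_pt (fun s t => W (Gc Gq t - Gc Gq s)) u v).
 { intros u v. apply c2_comp. apply continuity_2d_pt_minus. apply c2_snd, Ca. apply c2_fst, Ca. apply CW. }
 assert (K3 : forall u v, continuity_2d_pt (fun s t => Derive W (Gc Gq s - Gc Gq t) * Dq s) u v).
 { intros u v. apply continuity_2d_pt_mult. apply c2_comp. apply continuity_2d_pt_minus.
   apply c2_fst, Ca. apply c2_snd, Ca. apply CdW. apply c2_fst, CDq. }
 assert (K4 : forall u v, continuity_2d_pt (fun s t => Derive W (Gc Gq t - Gc Gq s) * Dq t) u v).
 { intros u v. apply continuity_2d_pt_mult. apply c2_comp. apply continuity_2d_pt_minus.
   apply c2_snd, Ca. apply c2_fst, Ca. apply CdW. apply c2_snd, CDq. }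
 f_equal.
 rewrite (RInt_ext01 _ (fun t => RInt (fun s => W (Gc Gp t - Gc Gp s)) 0 1 - RInt (fun s => W (Gc Gq t - Gc Gq s)) 0 1
    - RInt (fun s => Derive W (Gc Gq s - Gc Gq t) * Dq s) 0 1 - RInt (fun s => Derive W (Gc Gq t - Gc Gq s) * Dq t) 0 1)).
 2: { intros t Ht.
   rewrite <- !RInt_minusR; try (apply exc01; intros z; repeat apply cminus;
     first [ pose proof (c2d_1 _ z t (K1 z t)) as HH; cbv beta in HH; exact HH
           | pose proof (c2d_1 _ z t (K2 z t)) as HH; cbv beta in HH; exact HH
           | pose proof (c2d_1 _ z t (K3 z t)) as HH; cbv beta in HH; exact HH
           | pose proof (c2d_1 _ z t (K4 z t)) as HH; cbv beta in HH; exact HH ]).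
   apply RInt_ext01. intros s Hs. unfold bregman, Dq. rewrite !(Gc_id Gp), !(Gc_id Gq) by lra.
     assert (A1 := G_open p Gp Hsp Hdp Hip s Hs). assert (A2 := G_open p Gp Hsp Hdp Hip t Ht).
     assert (A3 := G_open q Gq Hsq Hdq Hiq s Hs). assert (A4 := G_open q Gq Hsq Hdq Hiq t Ht).
     replace (Gp s - Gp t) with (- (Gp t - Gp s)) by ring.
     replace (Gq s - Gq t) with (- (Gq t - Gq s)) by ring.
     rewrite !Hev by lra. rewrite Wodd by lra. ring. }
 assert (X1 : ex_RInt (fun t => RInt (fun s => W (Gc Gp t - Gc Gp s)) 0 1) 0 1).
 { apply exc01. intros. apply (pcont (fun s t => W (Gc Gp t - Gc Gp s))); auto. }
 assert (X2 : ex_RInt (fun t => RInt (fun s => W (Gc Gq t - Gc Gq s)) 0 1) 0 1).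
 { apply exc01. intros. apply (pcont (fun s t => W (Gc Gq t - Gc Gq s))); auto. }
 assert (X3 : ex_RInt (fun t => RInt (fun s => Derive W (Gc Gq s - Gc Gq t) * Dq s) 0 1) 0 1).
 { apply exc01. intros. apply (pcont (fun s t => Derive W (Gc Gq s - Gc Gq t) * Dq s)); auto. }
 assert (X4 : ex_RInt (fun t => RInt (fun s => Derive W (Gc Gq t - Gc Gq s) * Dq t) 0 1) 0 1).
 { apply exc01. intros. apply (pcont (fun s t => Derive W (Gc Gq t - Gc Gq s) * Dq t)); auto. }
 rewrite RInt_minusR, RInt_minusR, RInt_minusR; auto.
 2: apply (ex_RInt_minus (V:=R_CompleteNormedModule)); auto.
 2: apply (ex_RInt_minus (V:=R_CompleteNormedModule)); auto; apply (ex_RInt_minus (V:=R_CompleteNormedModule)); auto.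
 rewrite (swap01 (fun x y => Derive W (Gc Gq x - Gc Gq y) * Dq x)).
 unfold AA, T3. reflexivity.
 intros u v. apply continuity_2d_pt_mult. apply c2_comp. apply continuity_2d_pt_minus.
 apply c2_fst, Ca. apply c2_snd, Ca. apply CdW. apply c2_fst, CDq.
Qed.

End Part2.

Theorem part2 p q Gp Gq : smooth p -> smooth q -> density01 p -> density01 q ->
    is_inv_cdf p Gp -> is_inv_cdf q Gq ->
    (forall W : R -> R, smooth W -> (forall z, -1 <= z <= 1 -> W (- z) = W z) ->
       transport_bregman (interaction_fun W p) (interaction_fun W q)
         (interaction_var W q) (transport_map Gp q) q
       = / 2 * RInt (fun st => RInt (fun s =>
             bregman W (Gp s - Gp st) (Gq s - Gq st)) 0 1) 0 1).
Proof.
 intros Hsp Hsq Hdp Hdq Hip Hiq W HW Hev.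
 rewrite (rhs2 p q Gp Gq W Hsp Hsq Hdp Hdq Hip Hiq HW Hev).
 unfold transport_bregman.
 rewrite (interaction_AA W HW p Gp Hsp Hdp Hip), (interaction_AA W HW q Gq Hsq Hdq Hiq).
 rewrite (third_T3 p q Gp Gq W Hsp Hsq Hdp Hdq Hip Hiq HW). lra.
Qed.

Theorem mainTheorem3 :
  forall (p q Gp Gq : R -> R),
    smooth p -> smooth q -> density01 p -> density01 q ->
    is_inv_cdf p Gp -> is_inv_cdf q Gq ->
    (* (i) potential energy *)
    (forall V : R -> R, smooth V ->
       transport_bregman (potential_fun V p) (potential_fun V q)
         (potential_var V q) (transport_map Gp q) q
       = RInt (fun s => bregman V (Gp s) (Gq s)) 0 1)
    /\
    (* (ii) interaction energy *)
    (forall W : R -> R, smooth W -> (forall z, -1 <= z <= 1 -> W (- z) = W z) ->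
       transport_bregman (interaction_fun W p) (interaction_fun W q)
         (interaction_var W q) (transport_map Gp q) q
       = / 2 * RInt (fun st => RInt (fun s =>
             bregman W (Gp s - Gp st) (Gq s - Gq st)) 0 1) 0 1)
    /\
    (* (iii) internal energy *)
    (forall U : R -> R, C2_pos U ->
       transport_bregman (internal_fun U p) (internal_fun U q)
         (internal_var U q) (transport_map Gp q) q
       = RInt (fun s => bregman (Utilde U) (Derive Gp s) (Derive Gq s)) 0 1).

Proof.
  intros p q Gp Gq Hsp Hsq Hdp Hdq Hip Hiq.
  split; [| split].
  - apply part1; auto.
  - apply part2; auto.
  - intros U HU. eapply part3; eauto.
Qed.
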